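(* Let $(R,[\cdot_\lambda\cdot],\alpha,\beta)$ be a BiHom-Lie conformal superalgebra, let $k,l,s,t\ge0$ be integers, and let $f\in\mathrm{Der}_{\alpha^k\beta^l}(R)$ and $g\in\mathrm{Der}_{\alpha^s\beta^t}(R)$ be homogeneous. Define $[f_\lambda g]_\mu(a)=f_\lambda(g_{\mu-\lambda}a)-(-1)^{|f||g|}g_{\mu-\lambda}(f_\lambda a)$ for $a\in R$. Then $[f_\lambda g]\in\mathrm{Der}_{\alpha^{k+s}\beta^{l+t}}(R)[\lambda]$, i.e. writing $[f_\lambda g]_\mu=\sum_n\lambda^n h^{(n)}_\mu$, each $h^{(n)}$ is an $\alpha^{k+s}\beta^{l+t}$-derivation of $R$.
   Context: All spaces are over $\mathbb{C}$. For a $\mathbb{C}[\partial]$-module $V$, $V[\lambda]=\mathbb{C}[\lambda]\otimes V$. $|a|$ denotes the parity of a homogeneous element. Substitution $\lambda\mapsto-\lambda-\partial$ means: expand in powers of $\lambda$ and replace $\lambda$ by $-\lambda-\partial$, $\partial$ acting on the coefficients. A BiHom-Lie conformal superalgebra $(R,[\cdot_\lambda\cdot],\alpha,\beta)$ is a $\mathbb{Z}_2$-graded $\mathbb{C}[\partial]$-module $R$ with two commuting linear maps $\alpha,\beta$ and a $\mathbb{C}$-linear map $R\otimes R\to R[\lambda]$, $a\otimes b\mapsto[a_\lambda b]$, with $[R_{i\,\lambda}R_j]\subseteq R_{i+j}[\lambda]$, such that for all homogeneous $a,b,c$: (1) $\alpha\partial=\partial\alpha$, $\beta\partial=\partial\beta$;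 (2) $\alpha([a_\lambda b])=[\alpha(a)_\lambda\alpha(b)]$, $\beta([a_\lambda b])=[\beta(a)_\lambda\beta(b)]$; (3) $[(\partial a)_\lambda b]=-\lambda[a_\lambda b]$, $[a_\lambda(\partial b)]=(\partial+\lambda)[a_\lambda b]$; (4) $[\beta(a)_\lambda\alpha(b)]=-(-1)^{|a||b|}[\beta(b)_{-\lambda-\partial}\alpha(a)]$; (5) $[\alpha\beta(a)_\lambda[b_\mu c]]=[[\beta(a)_\lambda b]_{\lambda+\mu}\beta(c)]+(-1)^{|a||b|}[\beta(b)_\mu[\alpha(a)_\lambda c]]$. A conformal linear map $f:R\to R$ of parity $|f|\in\mathbb{Z}_2$ is a family of $\mathbb{C}$-linear maps $f_\lambda:R\to R[\lambda]$ with $f_\lambda\partial=(\partial+\lambda)f_\lambda$ and $f_\lambda(R_\theta)\subseteq R_{\theta+|f|}[\lambda]$. For integers $k,l\ge0$, an $\alpha^k\beta^l$-derivation of $R$ is a homogeneous conformal linear map $f$ with $f_\lambda\circ\alpha=\alpha\circ f_\lambda$, $f_\lambda\circ\beta=\beta\circ f_\lambda$, and $f_\lambda([a_\mu b])=[f_\lambda(a)_{\lambda+\mu}\alpha^k\beta^l(b)]+(-1)^{|a||f|}[\alpha^k\beta^l(a)_\mu f_\lambda(b)]$ for all homogeneous $a,b\in R$. $\mathrm{Der}_{\alpha^k\beta^l}(R)$ denotes the span of the $\alpha^k\beta^l$-derivations. *)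

(* Defs.v *)
(* Polynomials in the formal variable(s) with coefficients in
   a vector space V are represented by coefficient lists (lowest degree first),
   compared coefficientwise; two-variable polynomials in (lambda, mu) are given
   by their coefficient functions  i j |-> coefficient of lambda^i mu^j. *)
From HB Require Import structures.
From mathcomp Require Import all_boot all_order all_algebra.
Set Implicit Arguments. Unset Strict Implicit. Unset Printing Implicit Defensive.
Import GRing.Theory.
Local Open Scope ring_scope.

Section BiHomLCSA.
Variables (F : fieldType) (V : lmodType F).
Implicit Types (p u : seq V).

Definition peq (p q : seq V) := forall n, p`_n = q`_n.
Definition padd (p q : seq V) : seq V :=
  mkseq (fun n => p`_n + q`_n) (maxn (size p) (size q)).
Definition pscale (c : F) p : seq V := map ( *:%R c) p.
Definition plam p : seq V := 0 :: p.
Definition pmap (f : V -> V) p : seq V := map f p.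
(* substitution lambda |-> -lambda - d, d acting on the coefficients:
   sum_n (-lambda-d)^n p_n = sum_j lambda^j sum_n C(n,j) (-1)^j (-d)^(n-j) p_n *)
Definition psubst (d : V -> V) p : seq V :=
  mkseq (fun j => \sum_(n < size p)
           ((-1) ^+ j *: iter (n - j) (fun x => - d x) p`_n) *+ 'C(n, j))
        (size p).

(* T_lambda(u(mu)) : T (lambda-valued) applied to the mu-coefficients of u *)
Definition liftmu (T : V -> seq V) p (i j : nat) : V := (T p`_j)`_i.
(* sum_i lambda^i T_mu(u_i) : T (mu-valued) applied to the lambda-coefficients *)
Definition liftlam (T : V -> seq V) p (i j : nat) : V := (T p`_i)`_j.
(* sum_p lambda^p T_{lambda+mu}(u_p), u = sum_p lambda^p u_p *)
Definition plus_sub (T : V -> seq V) p (i j : nat) : V :=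
  \sum_(r < size p) \sum_(q < size (T p`_r) | (r + q == i + j)%N)
     (T p`_r)`_q *+ 'C(q, j).

Definition abpow (alpha beta : V -> V) (k l : nat) (x : V) : V :=
  iter k alpha (iter l beta x).

Definition psign (a b : bool) : F := (-1) ^+ (a && b).

(* ---- BiHom-Lie conformal superalgebra structure on V ----
   Rg false = R_0, Rg true = R_1 ; d = partial ; br a b = [a_lambda b]. *)
Record is_bihom_lcsa (Rg : bool -> {pred V}) (d : V -> V)
    (br : V -> V -> seq V) (alpha beta : V -> V) : Prop := {
  grade_sub : forall th, 0 \in Rg th /\
     (forall (c : F) x y, x \in Rg th -> y \in Rg th -> c *: x + y \in Rg th);
  grade_direct : forall x, x \in Rg false -> x \in Rg true -> x = 0;
  grade_span : forall x, exists x0 x1,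
     [/\ x0 \in Rg false, x1 \in Rg true & x = x0 + x1];
  d_lin : forall (c : F) x y, d (c *: x + y) = c *: d x + d y;
  d_grade : forall th x, x \in Rg th -> d x \in Rg th;
  alpha_lin : forall (c : F) x y, alpha (c *: x + y) = c *: alpha x + alpha y;
  beta_lin : forall (c : F) x y, beta (c *: x + y) = c *: beta x + beta y;
  alpha_grade : forall th x, x \in Rg th -> alpha x \in Rg th;
  beta_grade : forall th x, x \in Rg th -> beta x \in Rg th;
  alpha_beta : forall x, alpha (beta x) = beta (alpha x);
  br_linl : forall n (c : F) x y b,
     (br (c *: x + y) b)`_n = c *: (br x b)`_n + (br y b)`_n;
  br_linr : forall n (c : F) a x y,
     (br a (c *: x + y))`_n = c *: (br a x)`_n + (br a y)`_n;
  br_grade : forall i j a b n, a \in Rg i -> b \in Rg j ->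
     (br a b)`_n \in Rg (i (+) j);
  alpha_d : forall x, alpha (d x) = d (alpha x);
  beta_d : forall x, beta (d x) = d (beta x);
  alpha_br : forall a b, peq (pmap alpha (br a b)) (br (alpha a) (alpha b));
  beta_br : forall a b, peq (pmap beta (br a b)) (br (beta a) (beta b));
  br_dl : forall a b, peq (br (d a) b) (pscale (-1) (plam (br a b)));
  br_dr : forall a b, peq (br a (d b)) (padd (pmap d (br a b)) (plam (br a b)));
  br_skew : forall pa pb a b, a \in Rg pa -> b \in Rg pb ->
     peq (br (beta a) (alpha b))
         (pscale (- psign pa pb) (psubst d (br (beta b) (alpha a))));
  br_jacobi : forall pa pb pc a b c, a \in Rg pa -> b \in Rg pb -> c \in Rg pc ->
     forall i j,
     liftmu (br (alpha (beta a))) (br b c) i j =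
       plus_sub (fun x => br x (beta c)) (br (beta a) b) i j
       + psign pa pb *: liftlam (br (beta b)) (br (alpha a) c) i j
}.

Variables (Rg : bool -> {pred V}) (d : V -> V) (br : V -> V -> seq V)
  (alpha beta : V -> V).

Definition conformal (pf : bool) (f : V -> seq V) : Prop :=
  [/\ forall n (c : F) x y, (f (c *: x + y))`_n = c *: (f x)`_n + (f y)`_n,
      forall x, peq (f (d x)) (padd (pmap d (f x)) (plam (f x))) &
      forall th x n, x \in Rg th -> (f x)`_n \in Rg (th (+) pf)].

Definition is_deriv (k l : nat) (pf : bool) (f : V -> seq V) : Prop :=
  [/\ conformal pf f,
      forall x, peq (f (alpha x)) (pmap alpha (f x)),
      forall x, peq (f (beta x)) (pmap beta (f x)) &
      forall pa pb a b, a \in Rg pa -> b \in Rg pb -> forall i j,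
        liftmu f (br a b) i j =
          plus_sub (fun x => br x (abpow alpha beta k l b)) (f a) i j
          + psign pa pf *: liftlam (br (abpow alpha beta k l a)) (f b) i j].

(* [f_lambda g]_mu (a) = f_lambda(g_{mu-lambda} a) - (-1)^{|f||g|} g_{mu-lambda}(f_lambda a).
   dbr_t1 / dbr_t2 : coefficient of lambda^n mu^m of the two terms. *)
Definition dbr_t1 (f g : V -> seq V) (a : V) (n m : nat) : V :=
  \sum_(q < size (g a)) \sum_(p < size (f (g a)`_q) | (p + q == n + m)%N)
     (-1) ^+ (q - m) *: ((f (g a)`_q)`_p *+ 'C(q, m)).
Definition dbr_t2 (f g : V -> seq V) (a : V) (n m : nat) : V :=
  \sum_(p < size (f a)) \sum_(q < size (g (f a)`_p) | (p + q == n + m)%N)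
     (-1) ^+ (q - m) *: ((g (f a)`_p)`_q *+ 'C(q, m)).
(* all nonzero mu-coefficients have index below this bound *)
Definition dbr_bound (f g : V -> seq V) (a : V) : nat :=
  maxn (size (g a)) (\big[maxn/0%N]_(p < size (f a)) size (g (f a)`_p)).

(* h^(n), where [f_lambda g]_mu = sum_n lambda^n h^(n)_mu *)
Definition der_bracket (pf pg : bool) (f g : V -> seq V) (n : nat) : V -> seq V :=
  fun a => mkseq (fun m => dbr_t1 f g a n m - psign pf pg *: dbr_t2 f g a n m)
                 (dbr_bound f g a).

End BiHomLCSA.

(* Main.v *)
Require Import Defs.
From HB Require Import structures.
From mathcomp Require Import all_boot all_order all_algebra.
From mathcomp Require Import zify ring.
Require Import Defs.
Set Implicit Arguments. Unset Strict Implicit. Unset Printing Implicit Defensive.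
Import GRing.Theory.
Local Open Scope ring_scope.

Section Comb.
Variables (F : fieldType) (V : lmodType F).

Definition dl (b : bool) : F := (b : nat)%:R.
Definition conv (K : nat) (Phi : nat -> nat -> V) : V :=
  \sum_(r < K.+1) Phi r (K - r)%N.
Definition sgn (q m : nat) : F := (-1) ^+ (q - m)%N * ('C(q, m))%:R.
Definition Tg (n m : nat) (Z : nat -> nat -> V) : V :=
  conv (n + m)%N (fun p q => sgn q m *: Z p q).
Definition PSc (i j : nat) (Y : nat -> nat -> V) : V :=
  conv (i + j)%N (fun r q => ('C(q, j))%:R *: Y r q).

Lemma dl_true : dl true = 1. Proof. by rewrite /dl. Qed.
Lemma dl_false : dl false = 0. Proof. by rewrite /dl. Qed.

Lemma dlA (a b : bool) : dl (a && b) = dl a * dl b.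
Proof. by case: a; case: b; rewrite /dl /= ?mulr1 ?mulr0. Qed.

Lemma dsumV (M e : nat) (X : nat -> V) :
  \sum_(y < M) dl ((y : nat) == e) *: X y = dl (e < M)%N *: X e.
Proof.
case: (ltnP e M) => He.
  rewrite (bigD1 (Ordinal He)) //= eqxx dl_true scale1r big1 ?addr0 //.
  move=> y /eqP Hy; suff -> : (y : nat) == e = false by rewrite dl_false scale0r.
  by apply/negbTE/eqP => Hy'; apply: Hy; apply: val_inj.
rewrite dl_false scale0r big1 // => y _.
suff -> : (y : nat) == e = false by rewrite dl_false scale0r.
by apply/negbTE/eqP => Hy'; move: (ltn_ord y); rewrite Hy'; lia.
Qed.

Lemma dsumF (M e : nat) (X : nat -> F) :
  \sum_(y < M) dl ((y : nat) == e) * X y = dl (e < M)%N * X e.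
Proof.
case: (ltnP e M) => He.
  rewrite (bigD1 (Ordinal He)) //= eqxx dl_true mul1r big1 ?addr0 //.
  move=> y /eqP Hy; suff -> : (y : nat) == e = false by rewrite dl_false mul0r.
  by apply/negbTE/eqP => Hy'; apply: Hy; apply: val_inj.
rewrite dl_false mul0r big1 // => y _.
suff -> : (y : nat) == e = false by rewrite dl_false mul0r.
by apply/negbTE/eqP => Hy'; move: (ltn_ord y); rewrite Hy'; lia.
Qed.

Lemma conv_ext K (P1 P2 : nat -> nat -> V) :
  (forall r q, (r + q = K)%N -> P1 r q = P2 r q) -> conv K P1 = conv K P2.
Proof.
move=> H; apply: eq_bigr => r _; apply: H; move: (ltn_ord r). lia.
Qed.

Lemma conv_box (M K : nat) (Phi : nat -> nat -> V) : (K < M)%N ->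
  conv K Phi = \sum_(x < M) \sum_(y < M) dl (x + y == K)%N *: Phi x y.
Proof.
move=> HK.
have -> : \sum_(x < M) \sum_(y < M) dl (x + y == K)%N *: Phi x y =
          \sum_(x < M) dl (x <= K)%N *: Phi x (K - x)%N.
  apply: eq_bigr => x _.
  have -> : \sum_(y < M) dl (x + y == K)%N *: Phi x y =
            \sum_(y < M) dl (x <= K)%N *: (dl ((y:nat) == K - x)%N *: Phi x y).
    apply: eq_bigr => y _; rewrite scalerA -dlA.
    have -> : (x + y == K)%N = (x <= K)%N && ((y : nat) == K - x)%N by apply/idP/idP; lia.
    by [].
  by rewrite -scaler_sumr dsumV (_ : (K - x < M)%N) ?dl_true ?scale1r //; lia.
rewrite /conv (big_ord_widen M (fun r => Phi r (K - r)%N)) //.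
rewrite big_mkcond; apply: eq_bigr => x _ /=.
by rewrite ltnS; case: (x <= K)%N; rewrite ?dl_true ?dl_false ?scale1r ?scale0r.
Qed.


Lemma sgn_step (x m : nat) :
  sgn x m + sgn x.+1 m = if m is m'.+1 then sgn x m' else 0.
Proof.
rewrite /sgn; case: m => [|m'].
  by rewrite !subn0 !bin0 exprS !mulr1 mulN1r addrN.
case: (ltngtP x m') => H.
- by rewrite !bin_small //; try lia; rewrite !mulr0 addr0.
- rewrite subSS.
  have -> : (x - m')%N = (x - m'.+1).+1 by lia.
  rewrite binS natrD exprS; ring.
- by subst x; rewrite bin_small // subSS subnn !binn mulr0 add0r.
Qed.

Lemma core_id (u a i : nat) :
  \sum_(t < u.+1) ('C(u, t))%:R * sgn (a + t)%N i = dl (u <= i)%N * sgn a (i - u)%N.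
Proof.
elim: u a => [|u IH] a.
  by rewrite big_ord1 /= bin0 addn0 subn0 /dl.
rewrite big_ord_recl /= bin0 mulr1n mul1r.
have E : forall t : 'I_u.+1, ('C(u.+1, bump 0 t))%:R * sgn (a + bump 0 t)%N i =
   ('C(u, t.+1))%:R * sgn (a + t.+1)%N i + ('C(u, t))%:R * sgn (a.+1 + t)%N i.
  by move=> t; rewrite /bump /= add1n binS natrD mulrDl addSnnS.
rewrite (eq_bigr _ (fun t _ => E t)) big_split /= IH addrA addn0.
have -> : sgn a i + \sum_(t < u.+1) ('C(u, t.+1))%:R * sgn (a + t.+1)%N i =
          \sum_(t < u.+2) ('C(u, t))%:R * sgn (a + t)%N i.
  rewrite [RHS]big_ord_recl; congr (_ + _); first by rewrite bin0 addn0 mul1r.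
rewrite big_ord_recr /= bin_small // mul0r addr0 IH -mulrDr.
rewrite sgn_step.
case: (ltngtP u i) => H.
- have -> : (i - u)%N = (i - u.+1).+1 by lia.
  by [].
- by rewrite dl_false !mul0r.
- by rewrite H subnn dl_false mulr0 mul0r.
Qed.

Lemma bin_prod (j t c : nat) : (j + t <= c)%N ->
  ('C(j + t, j) * 'C(c, j + t) = 'C(c, j) * 'C(c - j, t))%N.
Proof.
move=> H.
have P : (0 < j`! * t`! * (c - j - t)`!)%N by rewrite !muln_gt0 !fact_gt0.
apply/eqP; rewrite -(eqn_pmul2r P); apply/eqP.
have E1 := bin_fact (leq_addr t j).
have E2 := bin_fact H.
have E3 : (j <= c)%N by lia.
have E3' := bin_fact E3.
have E4 : (t <= c - j)%N by lia.
have E4' := bin_fact E4.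
rewrite (_ : (j + t - j)%N = t) in E1; last by lia.
rewrite (_ : (c - (j + t))%N = (c - j - t)%N) in E2; last by lia.
transitivity ('C(c, j + t) * ('C(j + t, j) * (j`! * t`!)) * (c - j - t)`!)%N.
  by ring.
rewrite E1 -mulnA E2.
transitivity ('C(c, j) * (j`! * ('C(c - j, t) * (t`! * (c - j - t)`!))))%N.
  by rewrite E4' E3'.
by ring.
Qed.


Lemma swap1 (M : nat) (G : nat -> nat -> nat -> nat -> V) :
  \sum_(x < M) \sum_(a < M) \sum_(b < M) \sum_(c < M) G x a b c =
  \sum_(a < M) \sum_(b < M) \sum_(c < M) \sum_(x < M) G x a b c.
Proof.
rewrite exchange_big; apply: eq_bigr => a _.
rewrite exchange_big; apply: eq_bigr => b _.
by rewrite exchange_big.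
Qed.

Lemma ext2 (M : nat) (cf : nat -> nat -> F) (E : nat -> nat -> V)
  (e : nat -> nat -> nat -> nat -> nat -> F) (W : nat -> nat -> nat -> V) :
  (forall x y : nat, (x < M)%N -> (y < M)%N -> cf x y != 0 ->
     E x y = \sum_(a < M) \sum_(b < M) \sum_(c < M) e x y a b c *: W a b c) ->
  \sum_(x < M) \sum_(y < M) cf x y *: E x y =
  \sum_(a < M) \sum_(b < M) \sum_(c < M)
     (\sum_(x < M) \sum_(y < M) cf x y * e x y a b c) *: W a b c.
Proof.
move=> HE.
have -> : \sum_(x < M) \sum_(y < M) cf x y *: E x y =
  \sum_(x < M) \sum_(y < M) \sum_(a < M) \sum_(b < M) \sum_(c < M)
     (cf x y * e x y a b c) *: W a b c.
  apply: eq_bigr => x _; apply: eq_bigr => y _.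
  have [->|Hc] := eqVneq (cf x y) 0.
    rewrite scale0r; symmetry; apply: big1 => a _; apply: big1 => b _.
    by apply: big1 => c _; rewrite mul0r scale0r.
  rewrite (HE x y) //; rewrite !scaler_sumr; apply: eq_bigr => a _.
  rewrite !scaler_sumr; apply: eq_bigr => b _.
  rewrite !scaler_sumr; apply: eq_bigr => c _.
  by rewrite scalerA.
under eq_bigr => x _ do
  rewrite (swap1 M (fun y a b c => (cf x y * e x y a b c) *: W a b c)).
rewrite (swap1 M (fun x a b c => \sum_(y < M) (cf x y * e x y a b c) *: W a b c)).
apply: eq_bigr => a _; apply: eq_bigr => b _; apply: eq_bigr => c _.
rewrite scaler_suml; apply: eq_bigr => x _.
by rewrite scaler_suml.
Qed.

Lemma basis3 (M a0 b0 c0 : nat) (W : nat -> nat -> nat -> V) :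
  (a0 < M)%N -> (b0 < M)%N -> (c0 < M)%N ->
  W a0 b0 c0 = \sum_(a < M) \sum_(b < M) \sum_(c < M)
     (dl ((a : nat) == a0) * (dl ((b : nat) == b0) * dl ((c : nat) == c0))) *: W a b c.
Proof.
move=> Ha Hb Hc.
have E1 : forall a b : 'I_M, \sum_(c < M)
     (dl ((a : nat) == a0) * (dl ((b : nat) == b0) * dl ((c : nat) == c0))) *: W a b c
   = dl ((a : nat) == a0) *: (dl ((b : nat) == b0) *: W a b c0).
  move=> a b.
  have -> : W a b c0 = \sum_(c < M) dl ((c : nat) == c0) *: W a b c.
    by rewrite (dsumV M c0 (W a b)) Hc dl_true scale1r.
  rewrite !scaler_sumr; apply: eq_bigr => c _; by rewrite !scalerA mulrA.
have E2 : forall a : 'I_M, \sum_(b < M)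
     dl ((a : nat) == a0) *: (dl ((b : nat) == b0) *: W a b c0)
   = dl ((a : nat) == a0) *: W a b0 c0.
  move=> a.
  have -> : W a b0 c0 = \sum_(b < M) dl ((b : nat) == b0) *: W a b c0.
    by rewrite (dsumV M b0 (fun b => W a b c0)) Hb dl_true scale1r.
  by rewrite !scaler_sumr.
have -> : W a0 b0 c0 = \sum_(a < M) dl ((a : nat) == a0) *: W a b0 c0.
  by rewrite (dsumV M a0 (fun a => W a b0 c0)) Ha dl_true scale1r.
apply: eq_bigr => a _; rewrite -E2; apply: eq_bigr => b _.
by rewrite E1.
Qed.

Lemma basisPS (M p q' r : nat) (W : nat -> nat -> nat -> V) :
  (r < M)%N -> (p + q' < M)%N ->
  PSc p q' (fun r2 q2 => W r r2 q2) = \sum_(a < M) \sum_(b < M) \sum_(c < M)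
     (dl ((a : nat) == r) * (dl (b + c == p + q')%N * ('C(c, q'))%:R)) *: W a b c.
Proof.
move=> Hr Hpq.
rewrite /PSc (conv_box (M:=M)) //.
transitivity (\sum_(a < M) dl ((a : nat) == r) *: \sum_(b < M) \sum_(c < M)
   dl (b + c == p + q')%N *: (('C(c, q'))%:R *: W a b c)).
  by rewrite (dsumV M r (fun a => \sum_(b < M) \sum_(c < M)
   dl (b + c == p + q')%N *: (('C(c, q'))%:R *: W a b c))) Hr dl_true scale1r.
apply: eq_bigr => a _; rewrite scaler_sumr; apply: eq_bigr => b _.
rewrite scaler_sumr; apply: eq_bigr => c _.
by rewrite !scalerA mulrA.
Qed.

Lemma sum_shrink (M N : nat) (G : nat -> V) : (N <= M)%N ->
  (forall x, (N <= x)%N -> G x = 0) -> \sum_(x < M) G x = \sum_(x < N) G x.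
Proof.
move=> HNM HG; rewrite (big_ord_widen M G HNM) [RHS]big_mkcond.
apply: eq_bigr => x _; case: ifP => // H; rewrite HG //; lia.
Qed.

Lemma sum_shrinkF (M N : nat) (G : nat -> F) : (N <= M)%N ->
  (forall x, (N <= x)%N -> G x = 0) -> \sum_(x < M) G x = \sum_(x < N) G x.
Proof.
move=> HNM HG; rewrite (big_ord_widen M G HNM) [RHS]big_mkcond.
apply: eq_bigr => x _; case: ifP => // H; rewrite HG //; lia.
Qed.


Lemma sum_splitF (m u : nat) (G : nat -> F) :
  \sum_(x < m + u) G x = \sum_(x < m) G x + \sum_(t < u) G (m + t)%N.
Proof. by rewrite big_split_ord. Qed.

Lemma SumB1 (M a c i j : nat) : (c < M)%N ->
  \sum_(q' < M) ('C(q', j))%:R * ('C(c, q'))%:R * sgn (a + q' - j)%N i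
  = ('C(c, j))%:R * (dl (c <= i + j)%N * sgn a (i + j - c)%N).
Proof.
move=> HcM.
case: (leqP j c) => Hjc; last first.
  rewrite bin_small // mul0r big1 // => q' _.
  case: (leqP j q') => H; last by rewrite bin_small // mul0r mul0r.
  by rewrite (bin_small (n:=c)) ?mulr0 ?mul0r //; lia.
rewrite (sum_shrinkF (N:=c.+1) (G := fun q' => ('C(q', j))%:R * ('C(c, q'))%:R * sgn (a + q' - j)%N i)) //; last first.
  by move=> x Hx; rewrite (bin_small (n:=c)) ?mulr0 ?mul0r //.
rewrite (_ : c.+1 = j + (c - j).+1)%N; last by lia.
rewrite (sum_splitF j (c - j).+1 (fun q' => ('C(q', j))%:R * ('C(c, q'))%:R * sgn (a + q' - j)%N i)) big1 ?add0r; last first.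
  by move=> x _; rewrite bin_small ?mul0r //.
transitivity (\sum_(t < (c - j).+1) ('C(c, j))%:R * (('C(c - j, t))%:R * sgn (a + t)%N i)).
  apply: eq_bigr => t _.
  have Ht : (j + t <= c)%N by move: (ltn_ord t); lia.
  rewrite mulrA -natrM bin_prod // natrM.
  rewrite (_ : (a + (j + t) - j = a + t)%N); last by lia.
  by rewrite mulrA.
rewrite -mulr_sumr core_id.
rewrite (_ : (c - j <= i)%N = (c <= i + j)%N); last by apply/idP/idP; lia.
by rewrite (_ : (i - (c - j) = i + j - c)%N); last by lia.
Qed.

Lemma SumB2 (M b c i j : nat) : (c < M)%N ->
  \sum_(q' < M) ('C(q', j))%:R * ('C(c, q'))%:R * sgn (b + c - q')%N i
  = ('C(c, j))%:R * (dl (c <= i + j)%N * sgn b (i + j - c)%N).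
Proof.
move=> HcM.
case: (leqP j c) => Hjc; last first.
  rewrite bin_small // mul0r big1 // => q' _.
  case: (leqP j q') => H; last by rewrite bin_small // mul0r mul0r.
  by rewrite (bin_small (n:=c)) ?mulr0 ?mul0r //; lia.
rewrite (sum_shrinkF (N:=c.+1) (G := fun q' => ('C(q', j))%:R * ('C(c, q'))%:R * sgn (b + c - q')%N i)) //; last first.
  by move=> x Hx; rewrite (bin_small (n:=c)) ?mulr0 ?mul0r //.
rewrite (_ : c.+1 = j + (c - j).+1)%N; last by lia.
rewrite (sum_splitF j (c - j).+1 (fun q' => ('C(q', j))%:R * ('C(c, q'))%:R * sgn (b + c - q')%N i)) big1 ?add0r; last first.
  by move=> x _; rewrite bin_small ?mul0r //.
transitivity (\sum_(t < (c - j).+1) ('C(c, j))%:R * (('C(c - j, (c - j) - t))%:R * sgn (b + ((c - j) - t))%N i)).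
  apply: eq_bigr => t _.
  have Ht : (j + t <= c)%N by move: (ltn_ord t); lia.
  rewrite mulrA -natrM bin_prod // natrM bin_sub; last by move: (ltn_ord t); lia.
  rewrite (_ : (b + c - (j + t) = b + (c - j - t))%N); last by lia.
  by rewrite mulrA.
rewrite -mulr_sumr (reindex_inj rev_ord_inj) /=.
transitivity (('C(c, j))%:R * \sum_(t < (c - j).+1) ('C(c - j, t))%:R * sgn (b + t)%N i).
  congr (_ * _); apply: eq_bigr => t _.
  by rewrite subSS (_ : (c - j - (c - j - t) = t)%N); last by move: (ltn_ord t); lia.
rewrite core_id.
rewrite (_ : (c - j <= i)%N = (c <= i + j)%N); last by apply/idP/idP; lia.
by rewrite (_ : (i - (c - j) = i + j - c)%N); last by lia.
Qed.

End Comb.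
Arguments dl {F}. Arguments sgn {F}.

Section C2.
Variables (F : fieldType).

Lemma dsumA (M K y : nat) (X : nat -> F) :
  \sum_(x < M) dl (x + y == K)%N * X x =
  dl (y <= K)%N * (dl (K - y < M)%N * X (K - y)%N).
Proof.
transitivity (\sum_(x < M) dl (y <= K)%N * (dl ((x : nat) == K - y)%N * X x)).
  apply: eq_bigr => x _; rewrite mulrA -dlA.
  by rewrite (_ : (x + y == K)%N = (y <= K)%N && ((x : nat) == K - y)%N) //; apply/idP/idP; lia.
by rewrite -mulr_sumr dsumF.
Qed.

Lemma dsumF' (M e : nat) (X : nat -> F) :
  \sum_(y < M) dl (e == (y : nat)) * X y = dl (e < M)%N * X e.
Proof.
rewrite -(dsumF M e X); apply: eq_bigr => y _; by rewrite eq_sym.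
Qed.

Lemma dl_bool (b1 b2 : bool) : b1 = b2 -> dl (F:=F) b1 = dl b2.
Proof. by move=> ->. Qed.


Lemma coefID1 (M n i j a b c : nat) : (2 * (n + i + j) < M)%N ->
  (a < M)%N -> (b < M)%N -> (c < M)%N ->
  \sum_(p < M) \sum_(q < M) (dl (p + q == n + i)%N * sgn q i) *
    (\sum_(r < M) \sum_(q' < M) (dl (r + q' == q + j)%N * ('C(q', j))%:R) *
       (dl (a == r) * (dl (b + c == p + q')%N * ('C(c, q'))%:R)))
  = \sum_(r3 < M) \sum_(q3 < M) (dl (r3 + q3 == i + j)%N * ('C(q3, j))%:R) *
    (\sum_(p < M) \sum_(q < M) (dl (p + q == n + r3)%N * sgn q r3) *
       (dl (a == q) * (dl (b == p) * dl (c == q3))))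
  :> F.
Proof.
move=> HM Ha Hb Hc.
pose T : F := dl (a + b + c == n + i + j)%N *
   (('C(c, j))%:R * (dl (c <= i + j)%N * sgn a (i + j - c)%N)).
have R1 : forall r3 q3 : nat,
  \sum_(p < M) \sum_(q < M) (dl (p + q == n + r3)%N * sgn q r3) *
       (dl (a == q) * (dl (b == p) * dl (c == q3))) =
  dl (b + a == n + r3)%N * sgn a r3 * dl (c == q3) :> F.
  move=> r3 q3.
  transitivity (\sum_(p < M) dl (b == (p : nat)) *
      (dl (p + a == n + r3)%N * sgn a r3 * dl (c == q3)) : F).
    apply: eq_bigr => p _.
    transitivity (\sum_(q < M) dl (a == (q : nat)) *
      (dl (b == (p : nat)) * (dl (p + a == n + r3)%N * sgn a r3 * dl (c == q3))) : F).
      apply: eq_bigr => q _.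
      case: (eqVneq (q : nat) a) => [->|H].
        by rewrite ?dl_true; ring.
      by rewrite ?dl_false; ring.
    rewrite (dsumF' M a (fun _ => dl (b == (p : nat)) *
      (dl (p + a == n + r3)%N * sgn a r3 * dl (c == q3)))) Ha dl_true mul1r.
    by [].
  by rewrite (dsumF' M b (fun p => dl (p + a == n + r3)%N * sgn a r3 * dl (c == q3))) Hb dl_true mul1r.
have R2 : forall r3 : nat,
  \sum_(q3 < M) (dl (r3 + q3 == i + j)%N * ('C(q3, j))%:R) *
     (dl (b + a == n + r3)%N * sgn a r3 * dl (c == q3)) =
  dl (r3 + c == i + j)%N * (('C(c, j))%:R * dl (b + a == n + r3)%N * sgn a r3) :> F.
  move=> r3.
  transitivity (\sum_(q3 < M) dl (c == (q3 : nat)) *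
      (dl (r3 + q3 == i + j)%N * (('C(q3, j))%:R * dl (b + a == n + r3)%N * sgn a r3)) : F).
    apply: eq_bigr => q3 _.
    case: (eqVneq (q3 : nat) c) => [->|H].
      by rewrite ?dl_true; ring.
    by rewrite ?dl_false; ring.
  by rewrite (dsumF' M c (fun q3 => dl (r3 + q3 == i + j)%N * (('C(q3, j))%:R * dl (b + a == n + r3)%N * sgn a r3))) Hc dl_true mul1r.
have -> : \sum_(r3 < M) \sum_(q3 < M) (dl (r3 + q3 == i + j)%N * ('C(q3, j))%:R) *
    (\sum_(p < M) \sum_(q < M) (dl (p + q == n + r3)%N * sgn q r3) *
       (dl (a == q) * (dl (b == p) * dl (c == q3)))) = T.
  under eq_bigr => r3 _ do under eq_bigr => q3 _ do rewrite R1.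
  under eq_bigr => r3 _ do rewrite R2.
  rewrite (dsumA M (i + j) c (fun r3 => ('C(c, j))%:R * dl (b + a == n + r3)%N * sgn a r3)).
  rewrite /T (_ : (i + j - c < M)%N = true); last by lia.
  case: (leqP c (i + j)) => Hcij.
    rewrite (dl_bool (_ : (b + a == n + (i + j - c))%N = (a + b + c == n + i + j)%N)); last by apply/idP/idP; lia.
    rewrite dl_true; ring.
  rewrite dl_false; ring.
pose Y (p q q' : nat) : F := dl (a + q' == q + j)%N * (('C(q', j))%:R * (dl (b + c == p + q')%N * ('C(c, q'))%:R)).
have L1 : forall p q : nat,
  \sum_(r < M) \sum_(q' < M) (dl (r + q' == q + j)%N * ('C(q', j))%:R) *
       (dl (a == r) * (dl (b + c == p + q')%N * ('C(c, q'))%:R)) =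
  \sum_(q' < M) Y p q q'.
  move=> p q; rewrite exchange_big; apply: eq_bigr => q' _.
  transitivity (\sum_(r < M) dl (a == (r : nat)) * Y p q q' : F).
    apply: eq_bigr => r _; rewrite /Y.
    case: (eqVneq a (r : nat)) => [->|H].
      by rewrite ?dl_true; ring.
    by rewrite ?dl_false; ring.
  by rewrite (dsumF' M a (fun _ => Y p q q')) Ha dl_true mul1r.
under eq_bigr => p _ do under eq_bigr => q _ do rewrite L1.
have L2 : \sum_(p < M) \sum_(q < M) (dl (p + q == n + i)%N * sgn q i) * \sum_(q' < M) Y p q q'
  = \sum_(q < M) dl (q <= n + i)%N * (sgn q i * \sum_(q' < M) Y (n + i - q)%N q q').
  rewrite exchange_big; apply: eq_bigr => q _.
  transitivity (\sum_(p < M) dl (p + q == n + i)%N * (sgn q i * \sum_(q' < M) Y p q q') : F).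
    by apply: eq_bigr => p _; rewrite mulrA.
  rewrite (dsumA M (n + i) q (fun p => sgn q i * \sum_(q' < M) Y p q q')).
  by rewrite (_ : (n + i - q < M)%N = true) ?dl_true ?mul1r //; lia.
rewrite L2.
under eq_bigr => q _ do rewrite mulr_sumr mulr_sumr.
rewrite exchange_big /=.
have L4 : forall q' : nat, (q' < M)%N ->
  \sum_(q < M) dl (q <= n + i)%N * (sgn q i * Y (n + i - q)%N q q') =
  dl (a + b + c == n + i + j)%N * (('C(q', j))%:R * ('C(c, q'))%:R * sgn (a + q' - j)%N i).
  move=> q' Hq'.
  case: (boolP ((j <= q') && (q' <= c))%N) => Hjc; last first.
    have [Hlt|Hlt] : (q' < j)%N \/ (c < q')%N by move: Hjc; case: (leqP j q'); case: (leqP q' c) => //=; lia.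
      rewrite big1; first by rewrite (bin_small Hlt); ring.
      by move=> q _; rewrite /Y (bin_small Hlt); ring.
    rewrite big1; first by rewrite (bin_small Hlt); ring.
    by move=> q _; rewrite /Y (bin_small Hlt); ring.
  transitivity (\sum_(q < M) dl ((q : nat) == a + q' - j)%N *
     (dl ((a + q' - j) <= n + i)%N * (sgn (a + q' - j)%N i * (('C(q', j))%:R *
       (dl (b + c == (n + i - (a + q' - j)) + q')%N * ('C(c, q'))%:R)))) : F).
    apply: eq_bigr => q _; rewrite /Y.
    rewrite (dl_bool (_ : (a + q' == q + j)%N = ((q : nat) == a + q' - j)%N)); last by apply/idP/idP; lia.
    case: (eqVneq (q : nat) (a + q' - j)%N) => [->|H].
      by rewrite ?dl_true; ring.
    by rewrite ?dl_false; ring.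
  rewrite (dsumF M (a + q' - j)%N (fun _ => (dl ((a + q' - j) <= n + i)%N * (sgn (a + q' - j)%N i * (('C(q', j))%:R *
       (dl (b + c == (n + i - (a + q' - j)) + q')%N * ('C(c, q'))%:R)))))).
  case: (boolP (a + q' - j <= n + i)%N) => H1.
    rewrite (_ : (a + q' - j < M)%N = true); last by lia.
    rewrite (dl_bool (_ : (b + c == (n + i - (a + q' - j)) + q')%N = (a + b + c == n + i + j)%N)); last by apply/idP/idP; lia.
    rewrite dl_true; ring.
  rewrite (dl_bool (_ : (a + b + c == n + i + j)%N = false)); last by apply/negbTE/negP; lia.
  rewrite dl_false; ring.
transitivity (\sum_(q' < M) dl (a + b + c == n + i + j)%N * (('C(q', j))%:R * ('C(c, q'))%:R * sgn (a + q' - j)%N i) : F).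
  by apply: eq_bigr => q' _; apply: L4.
rewrite -mulr_sumr SumB1 //.
Qed.

Lemma coefID2 (M n i j a b c : nat) : (2 * (n + i + j) < M)%N ->
  (a < M)%N -> (b < M)%N -> (c < M)%N ->
  \sum_(p < M) \sum_(q < M) (dl (p + q == n + i)%N * sgn q i) *
    (\sum_(r < M) \sum_(q' < M) (dl (r + q' == p + j)%N * ('C(q', j))%:R) *
       (dl (a == r) * (dl (b + c == q + q')%N * ('C(c, q'))%:R)))
  = \sum_(r3 < M) \sum_(q3 < M) (dl (r3 + q3 == i + j)%N * ('C(q3, j))%:R) *
    (\sum_(p < M) \sum_(q < M) (dl (p + q == n + r3)%N * sgn q r3) *
       (dl (a == p) * (dl (b == q) * dl (c == q3))))
  :> F.
Proof.
move=> HM Ha Hb Hc.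
pose T : F := dl (a + b + c == n + i + j)%N *
   (('C(c, j))%:R * (dl (c <= i + j)%N * sgn b (i + j - c)%N)).
have R1 : forall r3 q3 : nat,
  \sum_(p < M) \sum_(q < M) (dl (p + q == n + r3)%N * sgn q r3) *
       (dl (a == p) * (dl (b == q) * dl (c == q3))) =
  dl (a + b == n + r3)%N * sgn b r3 * dl (c == q3) :> F.
  move=> r3 q3.
  transitivity (\sum_(p < M) dl (a == (p : nat)) *
      (dl (a + b == n + r3)%N * sgn b r3 * dl (c == q3)) : F).
    apply: eq_bigr => p _.
    transitivity (\sum_(q < M) dl (b == (q : nat)) *
      (dl (a == (p : nat)) * (dl (a + b == n + r3)%N * sgn b r3 * dl (c == q3))) : F).
      apply: eq_bigr => q _.
      case: (eqVneq b (q : nat)) => [->|H]; last by rewrite ?dl_false; ring.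
      case: (eqVneq a (p : nat)) => [->|H']; last by rewrite ?dl_false; ring.
      by rewrite ?dl_true; ring.
    by rewrite (dsumF' M b (fun _ => dl (a == (p : nat)) *
      (dl (a + b == n + r3)%N * sgn b r3 * dl (c == q3)))) Hb dl_true mul1r.
  by rewrite (dsumF' M a (fun _ => dl (a + b == n + r3)%N * sgn b r3 * dl (c == q3))) Ha dl_true mul1r.
have R2 : forall r3 : nat,
  \sum_(q3 < M) (dl (r3 + q3 == i + j)%N * ('C(q3, j))%:R) *
     (dl (a + b == n + r3)%N * sgn b r3 * dl (c == q3)) =
  dl (r3 + c == i + j)%N * (('C(c, j))%:R * dl (a + b == n + r3)%N * sgn b r3) :> F.
  move=> r3.
  transitivity (\sum_(q3 < M) dl (c == (q3 : nat)) *
      (dl (r3 + q3 == i + j)%N * (('C(q3, j))%:R * dl (a + b == n + r3)%N * sgn b r3)) : F).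
    apply: eq_bigr => q3 _.
    case: (eqVneq (q3 : nat) c) => [->|H].
      by rewrite ?dl_true; ring.
    by rewrite ?dl_false; ring.
  by rewrite (dsumF' M c (fun q3 => dl (r3 + q3 == i + j)%N * (('C(q3, j))%:R * dl (a + b == n + r3)%N * sgn b r3))) Hc dl_true mul1r.
have -> : \sum_(r3 < M) \sum_(q3 < M) (dl (r3 + q3 == i + j)%N * ('C(q3, j))%:R) *
    (\sum_(p < M) \sum_(q < M) (dl (p + q == n + r3)%N * sgn q r3) *
       (dl (a == p) * (dl (b == q) * dl (c == q3)))) = T.
  under eq_bigr => r3 _ do under eq_bigr => q3 _ do rewrite R1.
  under eq_bigr => r3 _ do rewrite R2.
  rewrite (dsumA M (i + j) c (fun r3 => ('C(c, j))%:R * dl (a + b == n + r3)%N * sgn b r3)).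
  rewrite /T (_ : (i + j - c < M)%N = true); last by lia.
  case: (leqP c (i + j)) => Hcij.
    rewrite (dl_bool (_ : (a + b == n + (i + j - c))%N = (a + b + c == n + i + j)%N)); last by apply/idP/idP; lia.
    rewrite dl_true; ring.
  rewrite dl_false; ring.
pose Y (p q q' : nat) : F := dl (a + q' == p + j)%N * (('C(q', j))%:R * (dl (b + c == q + q')%N * ('C(c, q'))%:R)).
have L1 : forall p q : nat,
  \sum_(r < M) \sum_(q' < M) (dl (r + q' == p + j)%N * ('C(q', j))%:R) *
       (dl (a == r) * (dl (b + c == q + q')%N * ('C(c, q'))%:R)) =
  \sum_(q' < M) Y p q q'.
  move=> p q; rewrite exchange_big; apply: eq_bigr => q' _.
  transitivity (\sum_(r < M) dl (a == (r : nat)) * Y p q q' : F).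
    apply: eq_bigr => r _; rewrite /Y.
    case: (eqVneq a (r : nat)) => [->|H].
      by rewrite ?dl_true; ring.
    by rewrite ?dl_false; ring.
  by rewrite (dsumF' M a (fun _ => Y p q q')) Ha dl_true mul1r.
under eq_bigr => p _ do under eq_bigr => q _ do rewrite L1.
have L2 : \sum_(p < M) \sum_(q < M) (dl (p + q == n + i)%N * sgn q i) * \sum_(q' < M) Y p q q'
  = \sum_(q < M) dl (q <= n + i)%N * (sgn q i * \sum_(q' < M) Y (n + i - q)%N q q').
  rewrite exchange_big; apply: eq_bigr => q _.
  transitivity (\sum_(p < M) dl (p + q == n + i)%N * (sgn q i * \sum_(q' < M) Y p q q') : F).
    by apply: eq_bigr => p _; rewrite mulrA.
  rewrite (dsumA M (n + i) q (fun p => sgn q i * \sum_(q' < M) Y p q q')).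
  by rewrite (_ : (n + i - q < M)%N = true) ?dl_true ?mul1r //; lia.
rewrite L2.
under eq_bigr => q _ do rewrite mulr_sumr mulr_sumr.
rewrite exchange_big /=.
have L4 : forall q' : nat, (q' < M)%N ->
  \sum_(q < M) dl (q <= n + i)%N * (sgn q i * Y (n + i - q)%N q q') =
  dl (a + b + c == n + i + j)%N * (('C(q', j))%:R * ('C(c, q'))%:R * sgn (b + c - q')%N i).
  move=> q' Hq'.
  case: (boolP ((j <= q') && (q' <= c))%N) => Hjc; last first.
    have [Hlt|Hlt] : (q' < j)%N \/ (c < q')%N by move: Hjc; case: (leqP j q'); case: (leqP q' c) => //=; lia.
      rewrite big1; first by rewrite (bin_small Hlt); ring.
      by move=> q _; rewrite /Y (bin_small Hlt); ring.
    rewrite big1; first by rewrite (bin_small Hlt); ring.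
    by move=> q _; rewrite /Y (bin_small Hlt); ring.
  transitivity (\sum_(q < M) dl ((q : nat) == b + c - q')%N *
     (dl ((b + c - q') <= n + i)%N * (sgn (b + c - q')%N i *
       (dl (a + q' == (n + i - (b + c - q')) + j)%N * (('C(q', j))%:R * ('C(c, q'))%:R)))) : F).
    apply: eq_bigr => q _; rewrite /Y.
    rewrite (dl_bool (_ : (b + c == q + q')%N = ((q : nat) == b + c - q')%N)); last by apply/idP/idP; lia.
    case: (eqVneq (q : nat) (b + c - q')%N) => [->|H].
      by rewrite ?dl_true; ring.
    by rewrite ?dl_false; ring.
  rewrite (dsumF M (b + c - q')%N (fun _ => (dl ((b + c - q') <= n + i)%N * (sgn (b + c - q')%N i *
       (dl (a + q' == (n + i - (b + c - q')) + j)%N * (('C(q', j))%:R * ('C(c, q'))%:R)))))).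
  case: (boolP (b + c - q' <= n + i)%N) => H1.
    rewrite (_ : (b + c - q' < M)%N = true); last by lia.
    rewrite (dl_bool (_ : (a + q' == (n + i - (b + c - q')) + j)%N = (a + b + c == n + i + j)%N)); last by apply/idP/idP; lia.
    rewrite dl_true; ring.
  rewrite (dl_bool (_ : (a + b + c == n + i + j)%N = false)); last by apply/negbTE/negP; lia.
  rewrite dl_false; ring.
transitivity (\sum_(q' < M) dl (a + b + c == n + i + j)%N * (('C(q', j))%:R * ('C(c, q'))%:R * sgn (b + c - q')%N i) : F).
  by apply: eq_bigr => q' _; apply: L4.
by rewrite -mulr_sumr SumB2.
Qed.

End C2.

Section C4.
Variables (F : fieldType) (V : lmodType F).

Lemma PSc_box (M i j : nat) (Y : nat -> nat -> V) : (i + j < M)%N ->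
  PSc i j Y = \sum_(x < M) \sum_(y < M) (dl (x + y == i + j)%N * ('C(y, j))%:R) *: Y x y.
Proof.
move=> H; rewrite /PSc (conv_box (M:=M)) //.
by apply: eq_bigr => x _; apply: eq_bigr => y _; rewrite scalerA.
Qed.

Lemma Tg_box (M n m : nat) (Z : nat -> nat -> V) : (n + m < M)%N ->
  Tg n m Z = \sum_(x < M) \sum_(y < M) (dl (x + y == n + m)%N * sgn y m) *: Z x y.
Proof.
move=> H; rewrite /Tg (conv_box (M:=M)) //.
by apply: eq_bigr => x _; apply: eq_bigr => y _; rewrite scalerA.
Qed.

Lemma dl_nz (b : bool) (z : F) : dl b * z != 0 -> b.
Proof. by case: b => //; rewrite dl_false mul0r eqxx. Qed.

Lemma ID1 n i j (W : nat -> nat -> nat -> V) :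
  Tg n i (fun p q => PSc q j (fun r q' => PSc p q' (fun r2 q2 => W r r2 q2))) =
  PSc i j (fun r3 q3 => Tg n r3 (fun p q => W q p q3)).
Proof.
pose M := (2 * (n + i + j)).+1.
have HM : (2 * (n + i + j) < M)%N by [].
rewrite (Tg_box (M:=M)); last by lia.
rewrite (ext2 (M:=M) (cf := fun p q => dl (p + q == n + i)%N * sgn q i)
   (E := fun p q => PSc q j (fun r q' => PSc p q' (fun r2 q2 => W r r2 q2)))
   (e := fun p q a b c => \sum_(r < M) \sum_(q' < M) (dl (r + q' == q + j)%N * ('C(q', j))%:R) *
       (dl (a == r) * (dl (b + c == p + q')%N * ('C(c, q'))%:R)))
   (W := W)); last first.
  move=> p q Hp Hq /dl_nz Hpq.
  rewrite (PSc_box (M:=M)); last by lia.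
  rewrite (ext2 (M:=M) (cf := fun r q' => dl (r + q' == q + j)%N * ('C(q', j))%:R)
   (E := fun r q' => PSc p q' (fun r2 q2 => W r r2 q2))
   (e := fun r q' a b c => dl (a == r) * (dl (b + c == p + q')%N * ('C(c, q'))%:R))
   (W := W)) //.
  move=> r q' Hr Hq' /dl_nz Hrq.
  by rewrite (basisPS (M:=M)) //; lia.
rewrite (PSc_box (M:=M)); last by lia.
rewrite (ext2 (M:=M) (cf := fun r3 q3 => dl (r3 + q3 == i + j)%N * ('C(q3, j))%:R)
   (E := fun r3 q3 => Tg n r3 (fun p q => W q p q3))
   (e := fun r3 q3 a b c => \sum_(p < M) \sum_(q < M) (dl (p + q == n + r3)%N * sgn q r3) *
       (dl (a == q) * (dl (b == p) * dl (c == q3))))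
   (W := W)); last first.
  move=> r3 q3 Hr3 Hq3 /dl_nz Hrq.
  rewrite (Tg_box (M:=M)); last by lia.
  rewrite (ext2 (M:=M) (cf := fun p q => dl (p + q == n + r3)%N * sgn q r3)
   (E := fun p q => W q p q3)
   (e := fun p q a b c => dl (a == q) * (dl (b == p) * dl (c == q3)))
   (W := W)) //.
  move=> p q Hp Hq _.
  by rewrite (basis3 (M:=M)).
apply: eq_bigr => a _; apply: eq_bigr => b _; apply: eq_bigr => c _.
by rewrite coefID1.
Qed.


Lemma ID2 n i j (W : nat -> nat -> nat -> V) :
  Tg n i (fun p q => PSc p j (fun r q' => PSc q q' (fun r2 q2 => W r r2 q2))) =
  PSc i j (fun r3 q3 => Tg n r3 (fun p q => W p q q3)).
Proof.
pose M := (2 * (n + i + j)).+1.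
have HM : (2 * (n + i + j) < M)%N by [].
rewrite (Tg_box (M:=M)); last by lia.
rewrite (ext2 (M:=M) (cf := fun p q => dl (p + q == n + i)%N * sgn q i)
   (E := fun p q => PSc p j (fun r q' => PSc q q' (fun r2 q2 => W r r2 q2)))
   (e := fun p q a b c => \sum_(r < M) \sum_(q' < M) (dl (r + q' == p + j)%N * ('C(q', j))%:R) *
       (dl (a == r) * (dl (b + c == q + q')%N * ('C(c, q'))%:R)))
   (W := W)); last first.
  move=> p q Hp Hq /dl_nz Hpq.
  rewrite (PSc_box (M:=M)); last by lia.
  rewrite (ext2 (M:=M) (cf := fun r q' => dl (r + q' == p + j)%N * ('C(q', j))%:R)
   (E := fun r q' => PSc q q' (fun r2 q2 => W r r2 q2))
   (e := fun r q' a b c => dl (a == r) * (dl (b + c == q + q')%N * ('C(c, q'))%:R))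
   (W := W)) //.
  move=> r q' Hr Hq' /dl_nz Hrq.
  by rewrite (basisPS (M:=M)) //; lia.
rewrite (PSc_box (M:=M)); last by lia.
rewrite (ext2 (M:=M) (cf := fun r3 q3 => dl (r3 + q3 == i + j)%N * ('C(q3, j))%:R)
   (E := fun r3 q3 => Tg n r3 (fun p q => W p q q3))
   (e := fun r3 q3 a b c => \sum_(p < M) \sum_(q < M) (dl (p + q == n + r3)%N * sgn q r3) *
       (dl (a == p) * (dl (b == q) * dl (c == q3))))
   (W := W)); last first.
  move=> r3 q3 Hr3 Hq3 /dl_nz Hrq.
  rewrite (Tg_box (M:=M)); last by lia.
  rewrite (ext2 (M:=M) (cf := fun p q => dl (p + q == n + r3)%N * sgn q r3)
   (E := fun p q => W p q q3)
   (e := fun p q a b c => dl (a == p) * (dl (b == q) * dl (c == q3)))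
   (W := W)) //.
  move=> p q Hp Hq _.
  by rewrite (basis3 (M:=M)).
apply: eq_bigr => a _; apply: eq_bigr => b _; apply: eq_bigr => c _.
by rewrite coefID2.
Qed.


Definition lin (h : V -> V) := forall (c : F) x y, h (c *: x + y) = c *: h x + h y.

Section LinLemmas.
Variable h : V -> V.
Hypothesis Hh : lin h.

Lemma lin0 : h 0 = 0.
Proof.
have E := Hh 1 0 0; rewrite scaler0 add0r scale1r in E.
by apply: (addrI (h 0)); rewrite -E addr0.
Qed.

Lemma linD x y : h (x + y) = h x + h y.
Proof. by have := Hh 1 x y; rewrite !scale1r. Qed.

Lemma linZ (c : F) x : h (c *: x) = c *: h x.
Proof. by have := Hh c x 0; rewrite !addr0 lin0 addr0. Qed.

Lemma linN x : h (- x) = - h x.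
Proof. by rewrite -scaleN1r linZ scaleN1r. Qed.

Lemma linB x y : h (x - y) = h x - h y.
Proof. by rewrite linD linN. Qed.

Lemma lin_sum (I : Type) (r : seq I) (P : pred I) (X : I -> V) :
  h (\sum_(i <- r | P i) X i) = \sum_(i <- r | P i) h (X i).
Proof.
apply: (big_rec2 (fun a b => h a = b)); first by rewrite lin0.
by move=> i a b _ <-; rewrite linD.
Qed.

Lemma lin_conv K Phi : h (conv K Phi) = conv K (fun a b => h (Phi a b)).
Proof. by rewrite /conv lin_sum. Qed.

Lemma lin_Tg n m Z : h (Tg n m Z) = Tg n m (fun p q => h (Z p q)).
Proof. by rewrite /Tg lin_conv; apply: eq_bigr => r _; rewrite linZ. Qed.

Lemma lin_PSc i j Y : h (PSc i j Y) = PSc i j (fun p q => h (Y p q)).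
Proof. by rewrite /PSc lin_conv; apply: eq_bigr => r _; rewrite linZ. Qed.

End LinLemmas.

Lemma conv_add K (P1 P2 : nat -> nat -> V) :
  conv K (fun a b => P1 a b + P2 a b) = conv K P1 + conv K P2.
Proof. by rewrite /conv big_split. Qed.

Lemma conv_scale K (c : F) (P : nat -> nat -> V) :
  conv K (fun a b => c *: P a b) = c *: conv K P.
Proof. by rewrite /conv scaler_sumr. Qed.

Lemma conv0 K : conv K (fun _ _ => 0 : V) = 0.
Proof. by rewrite /conv big1. Qed.

Lemma Tg_add n m (Z1 Z2 : nat -> nat -> V) :
  Tg n m (fun p q => Z1 p q + Z2 p q) = Tg n m Z1 + Tg n m Z2.
Proof. rewrite /Tg -conv_add; apply: conv_ext => r q _; by rewrite scalerDr. Qed.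

Lemma Tg_scale n m (c : F) (Z : nat -> nat -> V) :
  Tg n m (fun p q => c *: Z p q) = c *: Tg n m Z.
Proof. rewrite /Tg -conv_scale; apply: conv_ext => r q _; by rewrite !scalerA mulrC. Qed.

Lemma PSc_add i j (Z1 Z2 : nat -> nat -> V) :
  PSc i j (fun p q => Z1 p q + Z2 p q) = PSc i j Z1 + PSc i j Z2.
Proof. rewrite /PSc -conv_add; apply: conv_ext => r q _; by rewrite scalerDr. Qed.

Lemma PSc_scale i j (c : F) (Z : nat -> nat -> V) :
  PSc i j (fun p q => c *: Z p q) = c *: PSc i j Z.
Proof. rewrite /PSc -conv_scale; apply: conv_ext => r q _; by rewrite !scalerA mulrC. Qed.

Lemma Tg_ext n m (Z1 Z2 : nat -> nat -> V) :
  (forall p q, (p + q = n + m)%N -> Z1 p q = Z2 p q) -> Tg n m Z1 = Tg n m Z2.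
Proof. by move=> H; rewrite /Tg; apply: conv_ext => p q E; rewrite H. Qed.

Lemma PSc_ext i j (Z1 Z2 : nat -> nat -> V) :
  (forall p q, (p + q = i + j)%N -> Z1 p q = Z2 p q) -> PSc i j Z1 = PSc i j Z2.
Proof. by move=> H; rewrite /PSc; apply: conv_ext => p q E; rewrite H. Qed.

Lemma conv_sym K (P : nat -> nat -> V) : conv K P = conv K (fun a b => P b a).
Proof.
rewrite /conv (reindex_inj rev_ord_inj) /=; apply: eq_bigr => r _.
by rewrite subSS (_ : (K - (K - r) = r)%N) //; move: (ltn_ord r); lia.
Qed.

Lemma sized_conv (N0 : nat) (S : nat -> nat) K (X : nat -> nat -> V) :
  (forall r q, ((N0 <= r) || (S r <= q))%N -> X r q = 0) ->
  \sum_(r < N0) \sum_(q < S r | (r + q == K)%N) X r q = conv K X.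
Proof.
move=> HX.
have In : forall r : nat, \sum_(q < S r | (r + q == K)%N) X r q = dl (r <= K)%N *: X r (K - r)%N.
  move=> r; rewrite big_mkcond.
  transitivity (\sum_(q < S r) dl (r <= K)%N *: (dl ((q : nat) == K - r)%N *: X r q)).
    apply: eq_bigr => q _; rewrite scalerA -dlA.
    rewrite (_ : (r + q == K)%N = (r <= K)%N && ((q : nat) == K - r)%N); last by apply/idP/idP; lia.
    by case: ifP; rewrite ?dl_true ?dl_false ?scale1r ?scale0r.
  rewrite -scaler_sumr (dsumV (S r) (K - r)%N (X r)).
  case: (ltnP (K - r)%N (S r)) => H; first by rewrite dl_true scale1r.
  by rewrite (HX r) ?H ?orbT // !scaler0.
rewrite (eq_bigr (fun r : 'I_N0 => dl (r <= K)%N *: X r (K - r)%N)); last by move=> r _; rewrite In.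
rewrite -(sum_shrink (M := maxn N0 K.+1) (N := N0) (G := fun r => dl (r <= K)%N *: X r (K - r)%N)); last first.
- by move=> x Hx; rewrite HX ?Hx // scaler0.
- by apply: leq_maxl.
rewrite (sum_shrink (M := maxn N0 K.+1) (N := K.+1) (G := fun r => dl (r <= K)%N *: X r (K - r)%N)); last first.
- by move=> x Hx; rewrite (_ : (x <= K)%N = false) ?dl_false ?scale0r //; lia.
- by apply: leq_maxr.
by apply: eq_bigr => r _; rewrite (_ : (r <= K)%N = true) ?dl_true ?scale1r //; move: (ltn_ord r); lia.
Qed.

End C4.

Section Alg.
Variables (F : fieldType) (V : lmodType F).

Lemma final_alg (sg e1 e2 : F) (A1 A2 X X2 B1 B2 : V) : sg * sg = 1 ->
  (A1 + (e2 * sg) *: X + e1 *: (X2 + e2 *: B1)) - sg *: (A2 + (e1 * sg) *: X2 + e2 *: (X + e1 *: B2))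
  = (A1 - sg *: A2) + (e2 * e1) *: (B1 - sg *: B2).
Proof.
move=> Hs.
rewrite !scalerDr !scalerN !scalerA.
rewrite (_ : sg * (e1 * sg) = e1); last by rewrite mulrCA Hs mulr1.
rewrite (_ : sg * e2 * e1 = e2 * e1 * sg); last by ring.
rewrite (_ : sg * e2 = e2 * sg); last by ring.
rewrite (_ : e1 * e2 = e2 * e1); last by ring.
set x1 := (e2 * sg) *: X; set x2 := e1 *: X2; set b1 := (e2 * e1) *: B1.
set a2 := sg *: A2; set b2 := (e2 * e1 * sg) *: B2.
rewrite !opprD !addrA.
rewrite (addrAC (A1 + x1 + x2 + b1) (-a2) (-x2)).
rewrite (addrAC (A1 + x1 + x2) b1 (-x2)) addrK.
rewrite (addrAC (A1 + x1 + b1) (-a2) (-x1)) (addrAC (A1 + x1) b1 (-x1)) addrK.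
by rewrite (addrAC A1 b1 (-a2)).
Qed.

Lemma comb_alg (c sg : F) (a b a' b' : V) :
  (c *: a + b) - sg *: (c *: a' + b') = c *: (a - sg *: a') + (b - sg *: b').
Proof.
rewrite scalerDr scalerBr !scalerA mulrC opprD !addrA; congr (_ + _).
by rewrite addrAC.
Qed.

End Alg.

Section BH.
Variables (F : fieldType) (V : lmodType F) (Rg : bool -> {pred V}) (d : V -> V)
  (br : V -> V -> seq V) (alpha beta : V -> V).
Hypothesis HR : is_bihom_lcsa Rg d br alpha beta.

Lemma dL : lin d. Proof. exact: (d_lin HR). Qed.
Lemma aL : lin alpha. Proof. exact: (alpha_lin HR). Qed.
Lemma bL : lin beta. Proof. exact: (beta_lin HR). Qed.
Lemma brL1 n b : lin (fun x => (br x b)`_n).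
Proof. by move=> c x y; apply: (br_linl HR). Qed.
Lemma brL2 n a : lin (fun y => (br a y)`_n).
Proof. by move=> c x y; apply: (br_linr HR). Qed.

Lemma Rg0 th : 0 \in Rg th. Proof. exact: (grade_sub HR th).1. Qed.
Lemma RgC th (c : F) x y : x \in Rg th -> y \in Rg th -> c *: x + y \in Rg th.
Proof. exact: (grade_sub HR th).2. Qed.
Lemma RgD th x y : x \in Rg th -> y \in Rg th -> x + y \in Rg th.
Proof. by move=> Hx Hy; have := RgC 1 Hx Hy; rewrite scale1r. Qed.
Lemma RgZ th (c : F) x : x \in Rg th -> c *: x \in Rg th.
Proof. by move=> Hx; have := RgC c Hx (Rg0 th); rewrite addr0. Qed.
Lemma RgB th x y : x \in Rg th -> y \in Rg th -> x - y \in Rg th.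
Proof. by move=> Hx Hy; have := RgC (-1) Hy Hx; rewrite scaleN1r addrC. Qed.
Lemma Rg_conv th K (P : nat -> nat -> V) :
  (forall a b, P a b \in Rg th) -> conv K P \in Rg th.
Proof.
move=> H; rewrite /conv; apply: (big_ind (fun x => x \in Rg th)) => //.
- exact: Rg0.
- by move=> x y; apply: RgD.
Qed.
Lemma Rg_Tg th n m (Z : nat -> nat -> V) :
  (forall a b, Z a b \in Rg th) -> Tg n m Z \in Rg th.
Proof. by move=> H; apply: Rg_conv => a b; apply: RgZ. Qed.

Lemma iter_ab s x : iter s alpha (beta x) = beta (iter s alpha x).
Proof. by elim: s => //= s ->; rewrite (alpha_beta HR). Qed.
Lemma iter_ba l s x : iter l beta (iter s alpha x) = iter s alpha (iter l beta x).
Proof. by elim: l => //= l ->; rewrite iter_ab. Qed.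
Lemma abpow_comp k l s t x :
  abpow alpha beta k l (abpow alpha beta s t x) = abpow alpha beta (k + s) (l + t) x.
Proof. by rewrite /abpow iter_ba !iterD. Qed.
Lemma abpow_grade k l th x : x \in Rg th -> abpow alpha beta k l x \in Rg th.
Proof.
move=> Hx; rewrite /abpow.
elim: k => [|k IH] /=.
  by elim: l => [|l IHl] //=; apply: (beta_grade HR).
by apply: (alpha_grade HR).
Qed.

Lemma nth_pmap (h : V -> V) p n : h 0 = 0 -> (pmap h p)`_n = h p`_n.
Proof.
move=> H0; rewrite /pmap; case: (ltnP n (size p)) => Hn.
  by rewrite (nth_map 0).
by rewrite !nth_default ?size_map.
Qed.
Lemma nth_padd (p q : seq V) n : (padd p q)`_n = p`_n + q`_n.
Proof.
rewrite /padd; case: (ltnP n (maxn (size p) (size q))) => Hn.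
  by rewrite nth_mkseq.
rewrite !nth_default ?size_mkseq ?addr0 //.
  by apply: leq_trans Hn; apply: leq_maxr.
by apply: leq_trans Hn; apply: leq_maxl.
Qed.
Lemma nth_plam (p : seq V) n : (plam p)`_n = if n is n'.+1 then p`_n' else 0.
Proof. by case: n. Qed.

Lemma plus_sub_PSc (T : V -> seq V) (HT : forall q, (T 0)`_q = 0) (p : seq V) i j :
  plus_sub T p i j = PSc i j (fun r q => (T p`_r)`_q).
Proof.
rewrite /plus_sub (@sized_conv F V (size p) (fun r => size (T p`_r)) (i + j)%N (fun r q => (T p`_r)`_q *+ 'C(q, j))); last first.
  move=> r q /orP [H|H].
    by rewrite (nth_default 0 H) HT mul0rn.
  by rewrite (nth_default 0 H) mul0rn.
by rewrite /PSc; apply: conv_ext => r q _; rewrite scaler_nat.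
Qed.


Section Der.
Variables (k l : nat) (pf : bool) (f : V -> seq V).
Hypothesis Hf : is_deriv Rg d br alpha beta k l pf f.

Lemma fL n : lin (fun x => (f x)`_n).
Proof. by case: Hf => [[Hlin _ _] _ _ _] c x y; apply: Hlin. Qed.
Lemma f0 n : (f 0)`_n = 0.
Proof. exact: (lin0 (fL n)). Qed.
Lemma f_d x p : (f (d x))`_p = d ((f x)`_p) + (if p is p'.+1 then (f x)`_p' else 0).
Proof.
case: Hf => [[_ Hd _] _ _ _]; rewrite Hd nth_padd nth_pmap ?nth_plam //.
exact: (lin0 dL).
Qed.
Lemma f_gr th x n : x \in Rg th -> (f x)`_n \in Rg (th (+) pf).
Proof. by case: Hf => [[_ _ Hg] _ _ _]; apply: Hg. Qed.
Lemma f_al x n : (f (alpha x))`_n = alpha ((f x)`_n).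
Proof. by case: Hf => [_ Ha _ _]; rewrite Ha nth_pmap //; exact: (lin0 aL). Qed.
Lemma f_be x n : (f (beta x))`_n = beta ((f x)`_n).
Proof. by case: Hf => [_ _ Hb _]; rewrite Hb nth_pmap //; exact: (lin0 bL). Qed.
Lemma f_ab s t x n : (f (abpow alpha beta s t x))`_n = abpow alpha beta s t ((f x)`_n).
Proof.
rewrite /abpow; elim: s => [|s IH] /=.
  by elim: t => [|t IHt] //=; rewrite f_be IHt.
by rewrite f_al IH.
Qed.
Lemma f_der pa pb a b : a \in Rg pa -> b \in Rg pb -> forall i j,
  (f ((br a b)`_j))`_i =
  PSc i j (fun r q => (br ((f a)`_r) (abpow alpha beta k l b))`_q)
  + psign F pa pf *: (br (abpow alpha beta k l a) ((f b)`_i))`_j.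
Proof.
move=> Ha Hb i j; case: Hf => [_ _ _ Hder].
have := Hder pa pb a b Ha Hb i j; rewrite /liftmu /liftlam => ->.
rewrite plus_sub_PSc //.
by move=> q; apply: (lin0 (brL1 q _)).
Qed.

End Der.

End BH.

Section Gen.
Variables (F : fieldType) (V : lmodType F).

Lemma psignC (a b : bool) : psign F a b = psign F b a.
Proof. by case: a; case: b. Qed.
Lemma psign_addl (a b c : bool) : psign F (a (+) b) c = psign F a c * psign F b c.
Proof. by case: a; case: b; case: c; rewrite /psign /= ?expr0 ?expr1 ?mulr1 ?mul1r ?mulrNN ?mulr1. Qed.
Lemma psign_addr (a b c : bool) : psign F a (b (+) c) = psign F a b * psign F a c.
Proof. by case: a; case: b; case: c; rewrite /psign /= ?expr0 ?expr1 ?mulr1 ?mul1r ?mulrNN ?mulr1. Qed.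
Lemma psign_sq (a b : bool) : psign F a b * psign F a b = 1.
Proof. by case: a; case: b; rewrite /psign /= ?expr0 ?expr1 ?mulr1 ?mulrNN ?mulr1. Qed.

Lemma Tg_d (dd : V -> V) (Hd : lin dd) n m (Z : nat -> nat -> V) :
  Tg n m (fun p q => dd (Z p q) + (if p is p'.+1 then Z p' q else 0)
                     + (if q is q'.+1 then Z p q' else 0))
  = dd (Tg n m Z) + (if m is m'.+1 then Tg n m' Z else 0).
Proof.
rewrite Tg_add Tg_add (lin_Tg Hd) -addrA; congr (_ + _).
have E1 : forall K', conv K'.+1 (fun p q => sgn q m *: (if p is p'.+1 then Z p' q else 0))
   = \sum_(r < K'.+1) sgn (K' - r)%N m *: Z r (K' - r)%N.
  move=> K'; rewrite /conv big_ord_recl /= scaler0 add0r.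
  by apply: eq_bigr => r _; rewrite /bump /= add1n subSS.
have E2 : forall K', conv K'.+1 (fun p q => sgn q m *: (if q is q'.+1 then Z p q' else 0))
   = \sum_(r < K'.+1) sgn (K' - r).+1 m *: Z r (K' - r)%N.
  move=> K'; rewrite /conv big_ord_recr /= subnn scaler0 addr0.
  apply: eq_bigr => r _.
  have -> : (K'.+1 - r = (K' - r).+1)%N by move: (ltn_ord r); lia.
  by [].
rewrite /Tg.
case Hk: (n + m)%N => [|K'].
  rewrite /conv !big_ord1 /= !scaler0 addr0.
  by clear E1 E2; case: m Hk => //; lia.
rewrite E1 E2 -big_split /=.
transitivity (\sum_(i < K'.+1) (sgn (K' - i)%N m + sgn (K' - i).+1 m) *: Z i (K' - i)%N).
  by apply: eq_bigr => r _; rewrite scalerDl.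
clear E1 E2; case: m Hk => [|m'] Hk.
  by rewrite big1 // => r _; rewrite sgn_step scale0r.
rewrite (_ : (n + m')%N = K'); last by lia.
by apply: eq_bigr => r _; rewrite sgn_step.
Qed.

Lemma sized_conv' (N0 : nat) (S : nat -> nat) K (X : nat -> nat -> V) :
  (forall r q, ((N0 <= r) || (S r <= q))%N -> X r q = 0) ->
  \sum_(r < N0) \sum_(q < S r | (q + r == K)%N) X r q = conv K X.
Proof.
move=> H; rewrite -(@sized_conv F V N0 S K X H); apply: eq_bigr => r _.
by apply: eq_bigl => q; rewrite addnC.
Qed.

Section H.
Variables (f g : V -> seq V).
Hypothesis (Hf0 : forall p, (f 0)`_p = 0) (Hg0 : forall q, (g 0)`_q = 0).

Lemma t1_Tg x n m : dbr_t1 f g x n m = Tg n m (fun p q => (f ((g x)`_q))`_p).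
Proof.
rewrite /dbr_t1 (@sized_conv' (size (g x)) (fun q => size (f (g x)`_q)) (n + m)%N
  (fun q p => (-1) ^+ (q - m) *: ((f (g x)`_q)`_p *+ 'C(q, m)))); last first.
  move=> r q /orP [H|H].
    by rewrite (nth_default 0 H) Hf0 mul0rn scaler0.
  by rewrite (nth_default 0 H) mul0rn scaler0.
rewrite /Tg (conv_sym (n + m)%N (fun p q => sgn q m *: (f (g x)`_q)`_p)).
by apply: conv_ext => q p _; rewrite /sgn -scaler_nat scalerA.
Qed.

Lemma t2_Tg x n m : dbr_t2 f g x n m = Tg n m (fun p q => (g ((f x)`_p))`_q).
Proof.
rewrite /dbr_t2 (@sized_conv F V (size (f x)) (fun p => size (g (f x)`_p)) (n + m)%N
  (fun p q => (-1) ^+ (q - m) *: ((g (f x)`_p)`_q *+ 'C(q, m)))); last first.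
  move=> r q /orP [H|H].
    by rewrite (nth_default 0 H) Hg0 mul0rn scaler0.
  by rewrite (nth_default 0 H) mul0rn scaler0.
by apply: conv_ext => p q _; rewrite /sgn -scaler_nat scalerA.
Qed.

Lemma t1_0 x n m : (dbr_bound f g x <= m)%N -> dbr_t1 f g x n m = 0.
Proof.
move=> Hm; rewrite /dbr_t1 big1 // => q _; rewrite big1 // => p _.
rewrite bin_small ?mulr0n ?scaler0 //.
apply: (leq_trans (ltn_ord q)); apply: leq_trans Hm; exact: leq_maxl.
Qed.

Lemma t2_0 x n m : (dbr_bound f g x <= m)%N -> dbr_t2 f g x n m = 0.
Proof.
move=> Hm; rewrite /dbr_t2 big1 // => p _; rewrite big1 // => q _.
rewrite bin_small ?mulr0n ?scaler0 //.
apply: (leq_trans (ltn_ord q)); apply: leq_trans Hm.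
apply: leq_trans (leq_maxr _ _).
exact: (leq_bigmax (F := fun p : 'I_(size (f x)) => size (g (f x)`_p)) p).
Qed.

Lemma h_coef pf pg n x m :
  (der_bracket pf pg f g n x)`_m =
  Tg n m (fun p q => (f ((g x)`_q))`_p) - psign F pf pg *: Tg n m (fun p q => (g ((f x)`_p))`_q).
Proof.
rewrite -t1_Tg -t2_Tg /der_bracket.
case: (ltnP m (dbr_bound f g x)) => Hm.
  by rewrite nth_mkseq.
by rewrite nth_default ?size_mkseq // t1_0 // t2_0 // scaler0 subr0.
Qed.

End H.
End Gen.

Lemma comb_alg1 (F : fieldType) (V : lmodType F) (sg : F) (a b a' b' : V) :
  (a + b) - sg *: (a' + b') = (a - sg *: a') + (b - sg *: b').
Proof. by have := comb_alg 1 sg a b a' b'; rewrite !scale1r. Qed.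

Theorem mainTheorem10 (F : fieldType) (V : lmodType F)
  (Rg : bool -> {pred V}) (d : V -> V) (br : V -> V -> seq V)
  (alpha beta : V -> V)
  (HR : is_bihom_lcsa Rg d br alpha beta)
  (k l s t : nat) (pf pg : bool) (f g : V -> seq V) :
  is_deriv Rg d br alpha beta k l pf f ->
  is_deriv Rg d br alpha beta s t pg g ->
  forall n : nat,
    is_deriv Rg d br alpha beta (k + s) (l + t) (pf (+) pg)
      (der_bracket pf pg f g n).
Proof.
move=> Hf Hg n.
have Hf0 : forall p, (f 0)`_p = 0 by move=> p; apply: (lin0 (fL Hf p)).
have Hg0 : forall q, (g 0)`_q = 0 by move=> q; apply: (lin0 (fL Hg q)).
pose sg := psign F pf pg.
have hc := h_coef Hf0 Hg0 pf pg n.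
split; [split| | |].
-
  move=> m c x y; rewrite !hc.
  have E1 : Tg n m (fun p q => (f ((g (c *: x + y))`_q))`_p) =
            c *: Tg n m (fun p q => (f ((g x)`_q))`_p) + Tg n m (fun p q => (f ((g y)`_q))`_p).
    rewrite -Tg_scale -Tg_add; apply: Tg_ext => p q _.
    by rewrite (fL Hg) (fL Hf).
  have E2 : Tg n m (fun p q => (g ((f (c *: x + y))`_p))`_q) =
            c *: Tg n m (fun p q => (g ((f x)`_p))`_q) + Tg n m (fun p q => (g ((f y)`_p))`_q).
    rewrite -Tg_scale -Tg_add; apply: Tg_ext => p q _.
    by rewrite (fL Hf) (fL Hg).
  by rewrite E1 E2 comb_alg.
-
  move=> x m; rewrite nth_padd nth_pmap; last exact: (lin0 (dL HR)).
  rewrite nth_plam !hc.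
  have E1 : Tg n m (fun p q => (f ((g (d x))`_q))`_p) =
     Tg n m (fun p q => d ((f ((g x)`_q))`_p) + (if p is p'.+1 then (f ((g x)`_q))`_p' else 0)
                     + (if q is q'.+1 then (f ((g x)`_q'))`_p else 0)).
    apply: Tg_ext => p q _.
    rewrite (f_d HR Hg) (linD (fL Hf p)) (f_d HR Hf).
    by case: q => [|q] //=; rewrite Hf0.
  have E2 : Tg n m (fun p q => (g ((f (d x))`_p))`_q) =
     Tg n m (fun p q => d ((g ((f x)`_p))`_q) + (if p is p'.+1 then (g ((f x)`_p'))`_q else 0)
                     + (if q is q'.+1 then (g ((f x)`_p))`_q' else 0)).
    apply: Tg_ext => p q _.
    rewrite (f_d HR Hf) (linD (fL Hg q)) (f_d HR Hg).
    rewrite -addrA (addrC (if q is q'.+1 then _ else _)) addrA.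
    by case: p => [|p] //=; rewrite Hg0.
  rewrite E1 E2 !(Tg_d (dL HR)) (linB (dL HR)) (linZ (dL HR)).
  clear E1 E2; case: m => [|m].
    by rewrite !addr0.
  by rewrite comb_alg1 hc.
-
  move=> th x m Hx; rewrite hc.
  apply: (RgB HR); last apply: (RgZ HR).
    apply: (Rg_Tg HR) => p q.
    rewrite (_ : th (+) (pf (+) pg) = th (+) pg (+) pf); last by rewrite addbA addbAC.
    by apply: (f_gr Hf); apply: (f_gr Hg).
  apply: (Rg_Tg HR) => p q.
  rewrite (_ : th (+) (pf (+) pg) = th (+) pf (+) pg); last by rewrite addbA.
  by apply: (f_gr Hg); apply: (f_gr Hf).
-
  move=> x m; rewrite nth_pmap; last exact: (lin0 (aL HR)).
  rewrite !hc (linB (aL HR)) (linZ (aL HR)) !(lin_Tg (aL HR)).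
  congr (_ - _ *: _); apply: Tg_ext => p q _.
    by rewrite (f_al HR Hg) (f_al HR Hf).
  by rewrite (f_al HR Hf) (f_al HR Hg).
-
  move=> x m; rewrite nth_pmap; last exact: (lin0 (bL HR)).
  rewrite !hc (linB (bL HR)) (linZ (bL HR)) !(lin_Tg (bL HR)).
  congr (_ - _ *: _); apply: Tg_ext => p q _.
    by rewrite (f_be HR Hg) (f_be HR Hf).
  by rewrite (f_be HR Hf) (f_be HR Hg).
move=> pa pb a b Ha Hb i j.
rewrite /liftmu /liftlam plus_sub_PSc; last by move=> q; exact: (lin0 (brL1 HR q _)).
pose e1 := psign F pa pg.
pose e2 := psign F pa pf.
have Ec2a : abpow alpha beta k l (abpow alpha beta s t a) = abpow alpha beta (k + s) (l + t) a.
  exact: (abpow_comp HR).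
have Ec2b : abpow alpha beta k l (abpow alpha beta s t b) = abpow alpha beta (k + s) (l + t) b.
  exact: (abpow_comp HR).
have Ec2a' : abpow alpha beta s t (abpow alpha beta k l a) = abpow alpha beta (k + s) (l + t) a.
  by rewrite (abpow_comp HR) addnC (addnC t).
have Ec2b' : abpow alpha beta s t (abpow alpha beta k l b) = abpow alpha beta (k + s) (l + t) b.
  by rewrite (abpow_comp HR) addnC (addnC t).
have T1 : Tg n i (fun p q => (f ((g ((br a b)`_j))`_q))`_p) =
  Tg n i (fun p q => PSc q j (fun r q' => PSc p q' (fun r2 q2 =>
       (br ((f ((g a)`_r))`_r2) (abpow alpha beta (k + s) (l + t) b))`_q2)))
  + (e2 * sg) *: Tg n i (fun p q => PSc q j (fun r q' =>
       (br (abpow alpha beta k l ((g a)`_r)) (abpow alpha beta s t ((f b)`_p)))`_q'))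
  + e1 *: (Tg n i (fun p q => PSc p j (fun r q' =>
       (br (abpow alpha beta s t ((f a)`_r)) (abpow alpha beta k l ((g b)`_q)))`_q'))
    + e2 *: Tg n i (fun p q => (br (abpow alpha beta (k + s) (l + t) a) ((f ((g b)`_q))`_p))`_j)).
  rewrite -!Tg_scale -!Tg_add -?Tg_scale -?Tg_add.
  apply: Tg_ext => p q _.
  rewrite (f_der HR Hg Ha Hb q j) (linD (fL Hf p)) (linZ (fL Hf p)) (lin_PSc (fL Hf p)).
  rewrite (f_der HR Hf (abpow_grade HR s t Ha) (f_gr Hg q Hb) p j) Ec2a.
  rewrite -PSc_scale -PSc_add.
  congr (_ + _).
    apply: PSc_ext => r q' _.
    rewrite (f_der HR Hf (f_gr Hg r Ha) (abpow_grade HR s t Hb) p q') psign_addl (psignC F pg pf).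
    by rewrite (f_ab HR Hf) Ec2b.
  congr (_ *: (_ + _)).
  by apply: PSc_ext => r q' _; rewrite (f_ab HR Hf).
have T2 : Tg n i (fun p q => (g ((f ((br a b)`_j))`_p))`_q) =
  Tg n i (fun p q => PSc p j (fun r q' => PSc q q' (fun r2 q2 =>
       (br ((g ((f a)`_r))`_r2) (abpow alpha beta (k + s) (l + t) b))`_q2)))
  + (e1 * sg) *: Tg n i (fun p q => PSc p j (fun r q' =>
       (br (abpow alpha beta s t ((f a)`_r)) (abpow alpha beta k l ((g b)`_q)))`_q'))
  + e2 *: (Tg n i (fun p q => PSc q j (fun r q' =>
       (br (abpow alpha beta k l ((g a)`_r)) (abpow alpha beta s t ((f b)`_p)))`_q'))
    + e1 *: Tg n i (fun p q => (br (abpow alpha beta (k + s) (l + t) a) ((g ((f b)`_p))`_q))`_j)).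
  rewrite -!Tg_scale -!Tg_add -?Tg_scale -?Tg_add.
  apply: Tg_ext => p q _.
  rewrite (f_der HR Hf Ha Hb p j) (linD (fL Hg q)) (linZ (fL Hg q)) (lin_PSc (fL Hg q)).
  rewrite (f_der HR Hg (abpow_grade HR k l Ha) (f_gr Hf p Hb) q j) Ec2a'.
  rewrite -PSc_scale -PSc_add.
  congr (_ + _).
    apply: PSc_ext => r q' _.
    rewrite (f_der HR Hg (f_gr Hf r Ha) (abpow_grade HR k l Hb) q q') psign_addl.
    by rewrite (f_ab HR Hg) Ec2b'.
  congr (_ *: (_ + _)).
  by apply: PSc_ext => r q' _; rewrite (f_ab HR Hg).
have R1 : PSc i j (fun r q => (br ((der_bracket pf pg f g n a)`_r) (abpow alpha beta (k + s) (l + t) b))`_q)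
  = Tg n i (fun p q => PSc q j (fun r q' => PSc p q' (fun r2 q2 =>
       (br ((f ((g a)`_r))`_r2) (abpow alpha beta (k + s) (l + t) b))`_q2)))
    - sg *: Tg n i (fun p q => PSc p j (fun r q' => PSc q q' (fun r2 q2 =>
       (br ((g ((f a)`_r))`_r2) (abpow alpha beta (k + s) (l + t) b))`_q2))).
  rewrite (ID1 n i j (fun r r2 q2 => (br ((f ((g a)`_r))`_r2) (abpow alpha beta (k + s) (l + t) b))`_q2)).
  rewrite (ID2 n i j (fun r r2 q2 => (br ((g ((f a)`_r))`_r2) (abpow alpha beta (k + s) (l + t) b))`_q2)).
  rewrite -scaleNr -PSc_scale -PSc_add.
  apply: PSc_ext => r q _.
  rewrite hc (linB (brL1 HR q _)) (linZ (brL1 HR q _)) !(lin_Tg (brL1 HR q _)) scaleNr.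
  by [].
have R2 : psign F pa (pf (+) pg) *: (br (abpow alpha beta (k + s) (l + t) a) ((der_bracket pf pg f g n b)`_i))`_j
  = (e2 * e1) *: (Tg n i (fun p q => (br (abpow alpha beta (k + s) (l + t) a) ((f ((g b)`_q))`_p))`_j)
       - sg *: Tg n i (fun p q => (br (abpow alpha beta (k + s) (l + t) a) ((g ((f b)`_p))`_q))`_j)).
  rewrite hc (linB (brL2 HR j _)) (linZ (brL2 HR j _)) !(lin_Tg (brL2 HR j _)) psign_addr.
  by [].
rewrite hc T1 T2 R1 R2.
by apply: final_alg; apply: psign_sq.
Qed.
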